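(* Let $\Phi_{\mathbf 0}(\xi,w,z)$ and $\Phi(\xi,w)=\int_\xi^\infty\int_{-1}^1\Phi_{\mathbf 0}(\eta,w,z)\,dz\,d\eta$ be as defined in the context, and put $u=\xi(1-|w|)$. Then, as $\xi\to\infty$, uniformly in $w\in(-1,1)$, \[ \Phi(\xi,w)=\frac{3}{2\pi^2}(1-u)^2\xi^{-1}+O(\xi^{-2})\quad\text{if } u\in[0,1), \] and $\Phi(\xi,w)=0$ otherwise.
   Context: For $\xi>0$ and $w,z\in(-1,1)$, $\Phi_{\mathbf 0}(\xi,w,z)=\frac{6}{\pi^2}\Upsilon\Bigl(1+\frac{\xi^{-1}-\max(|w|,|z|)-1}{|w+z|}\Bigr)$ if $w+z\neq0$; $\Phi_{\mathbf 0}(\xi,w,z)=0$ if $w+z=0$ and $\xi^{-1}<1+|w|$; $\Phi_{\mathbf 0}(\xi,w,z)=\frac{6}{\pi^2}$ if $w+z=0$ and $\xi^{-1}\ge1+|w|$. Here $\Upsilon(x)=0$ for $x\le0$, $\Upsilon(x)=x$ for $0<x<1$, $\Upsilon(x)=1$ for $x\ge1$. *)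

(* Defs.v *)
From HB Require Import structures.
From mathcomp Require Import all_boot all_order all_algebra.
From mathcomp Require Import all_classical all_reals all_analysis.
Set Implicit Arguments. Unset Strict Implicit. Unset Printing Implicit Defensive.
Import Order.TTheory GRing.Theory Num.Theory.
Local Open Scope classical_set_scope.
Local Open Scope ring_scope.

Definition Upsilon {R : realType} (x : R) : R :=
  if x <= 0 then 0 else if x < 1 then x else 1.

Definition Phi0 {R : realType} (xi w z : R) : R :=
  if w + z != 0 then
    6 / pi ^+ 2 * Upsilon (1 + (xi^-1 - Num.max `|w| `|z| - 1) / `|w + z|)
  else if xi^-1 < 1 + `|w| then 0 else 6 / pi ^+ 2.

Definition Phi {R : realType} (xi w : R) : \bar R :=
  (\int[lebesgue_measure]_(eta in `[xi, +oo[%classic)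
     (\int[lebesgue_measure]_(z in `](-1)%R, 1%R[%classic) (Phi0 eta w z)%:E))%E.

(* Main.v *)
Require Import Defs.
From HB Require Import structures.
From mathcomp Require Import all_boot all_order all_algebra.
From mathcomp Require Import all_classical all_reals all_analysis.
From mathcomp Require Import ring lra measurable_realfun.
Import Order.TTheory GRing.Theory Num.Theory numFieldNormedType.Exports.
Local Open Scope classical_set_scope.
Local Open Scope ring_scope.
Section S.
Variable R : realType.
Local Notation mu := (@lebesgue_measure R).

Lemma ftc_gen (f F : R -> R) (p q : R) : p <= q ->
  (forall x : R, p <= x <= q -> is_derive x 1 F (f x)) ->
  (forall x : R, p <= x <= q -> derivable f x 1) ->
  (\int[mu]_(x in `[p, q]) (f x)%:E = (F q - F p)%:E)%E.
Proof.
rewrite le_eqVlt => /predU1P[<- _ _|pq dF df].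
  by rewrite set_itv1 integral_set1 subrr.
have cF (x : R) : p <= x <= q -> {for x, continuous F}.
  move=> /dF H; apply: differentiable_continuous; apply/derivable1_diffP.
  by have [] := H.
apply: continuous_FTC2 => //.
- apply: continuous_subspace_itv => x; rewrite in_itv/= => /df H.
  by apply: differentiable_continuous; apply/derivable1_diffP.
- split.
  + move=> x; rewrite in_itv/= => /andP[px xq].
    by have [] := dF x; rewrite ?ltW ?px ?xq.
  + by apply: cvg_at_right_filter; apply: cF; rewrite lexx ltW.
  + by apply: cvg_at_left_filter; apply: cF; rewrite lexx ltW.
- move=> x; rewrite in_itv/= => /andP[px xq].
  have H : is_derive x 1 F (f x) by apply: dF; rewrite !ltW.
  by rewrite derive1E derive_val.
Qed.

Lemma lin_int (p q al be : R) : p <= q ->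
  (\int[mu]_(x in `[p, q]) (al * x + be)%:E =
   (al * (q ^+ 2 - p ^+ 2) / 2 + be * (q - p))%:E)%E.
Proof.
move=> pq.
have dF : forall x : R, p <= x <= q ->
    is_derive x 1 (fun x => al * x ^+ 2 / 2 + be * x) (al * x + be).
  move=> y _; apply: is_derive_eq.
  by rewrite /GRing.scale /=; field.
have df : forall x : R, p <= x <= q -> derivable (fun x => al * x + be) x 1.
  by move=> y _.
by rewrite (ftc_gen _ _ _ _ pq dF df); congr (_%:E); field.
Qed.


Lemma le_int_ge0 (D : set R) (f g : R -> \bar R) :
  (forall x, D x -> 0 <= f x)%E -> (forall x, D x -> f x <= g x)%E ->
  (\int[mu]_(x in D) f x <= \int[mu]_(x in D) g x)%E.
Proof.
move=> f0 fg.
have g0 : forall x, D x -> (0 <= g x)%E by move=> x Dx; exact: le_trans (f0 _ Dx) (fg _ Dx).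
rewrite ge0_integralE // ge0_integralE //.
apply: ereal_sup_le => _ [h /= hf <-]; exists h => //= x.
apply: le_trans (hf x) _; rewrite /patch; case: ifP => // /set_mem; exact: fg.
Qed.
Lemma inv_int (p q A B : R) : 0 < p -> p <= q ->
  (\int[mu]_(x in `[p, q]) (A * x ^- 2 + B)%:E =
   (A * (p^-1 - q^-1) + B * (q - p))%:E)%E.
Proof.
move=> p0 pq.
have dF : forall x : R, p <= x <= q ->
    is_derive x 1 (fun x => - A * x^-1 + B * x) (A * x ^- 2 + B).
  move=> y /andP[py _]; have y0 : y != 0 by rewrite gt_eqF // (lt_le_trans p0 py).
  have hV : is_derive y 1 (fun x : R => x^-1) (- y ^- 2 *: 1).
    exact: (@is_deriveV R (fun x => x) y 1 1 y0).
  apply: is_derive_eq.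
  by rewrite /GRing.scale /=; field.
have df : forall x : R, p <= x <= q -> derivable (fun x : R => A * x ^- 2 + B) x 1.
  move=> y /andP[py _]; have y0 : y ^+ 2 != 0 by rewrite expf_neq0 // gt_eqF // (lt_le_trans p0 py).
  by apply: derivableD => //; apply: derivableM => //.
rewrite (ftc_gen _ _ _ _ pq dF df); congr (_%:E).
have q0 : q != 0 by rewrite gt_eqF // (lt_le_trans p0 pq).
have p0' : p != 0 by rewrite gt_eqF.
by field; rewrite q0 p0'.
Qed.
Lemma split2 (f : R -> \bar R) (p m q : R) : p <= m -> m <= q ->
  measurable_fun `[p, q]%classic f ->
  (\int[mu]_(x in `[p, q]) f x =
   \int[mu]_(x in `[p, m]) f x + \int[mu]_(x in `[m, q]) f x)%E.
Proof.
move=> pm mq mf.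
have E : `[p, q]%classic = `[p, m]%classic `|` `]m, q]%classic :> set R.
  by apply: itv_bndbnd_setU; rewrite bnd_simp.
rewrite E integral_setU //; last 2 first.
- by rewrite -E.
- rewrite disj_set2E; apply/eqP/seteqP; split => x //=.
  rewrite !in_itv /= => -[/andP[_ xm] /andP[mx _]].
  by move: (lt_le_trans mx xm); rewrite ltxx.
rewrite integral_itv_obnd_cbnd //.
apply: measurable_funS mf => //; rewrite E; exact: subsetUr.
Qed.
Lemma int_piece (g : R -> R) (p q a b : R) : p <= q ->
  (forall x, p <= x <= q -> g x = a * x + b) ->
  (\int[mu]_(x in `[p, q]) (g x)%:E = (a * (q ^+ 2 - p ^+ 2) / 2 + b * (q - p))%:E)%E.
Proof.
move=> pq hg; rewrite -lin_int //; apply: eq_integral => x.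
by rewrite inE /= in_itv /= => /hg ->.
Qed.

Lemma int3 (g : R -> R) (p1 p2 a1 b1 a2 b2 a3 b3 : R) :
  -1 <= p1 -> p1 <= p2 -> p2 <= 1 -> measurable_fun setT g ->
  (forall x, -1 <= x <= p1 -> g x = a1 * x + b1) ->
  (forall x, p1 <= x <= p2 -> g x = a2 * x + b2) ->
  (forall x, p2 <= x <= 1 -> g x = a3 * x + b3) ->
  (\int[mu]_(x in `](-1)%R, 1%R[) (g x)%:E =
   (a1 * (p1 ^+ 2 - 1) / 2 + b1 * (p1 + 1) + (a2 * (p2 ^+ 2 - p1 ^+ 2) / 2 + b2 * (p2 - p1))
    + (a3 * (1 - p2 ^+ 2) / 2 + b3 * (1 - p2)))%:E)%E.
Proof.
move=> h1 h12 h2 mg e1 e2 e3.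
have mg' : measurable_fun setT (EFin \o g) by exact/measurable_EFinP.
have mS : forall D, measurable_fun D (EFin \o g).
  by move=> D; apply: measurable_funS mg'.
rewrite -(@integral_itv_bndoo _ _ _ _ true false); last exact: mS.
rewrite (@split2 _ _ p1 _ h1 (le_trans h12 h2) (mS _)).
rewrite (@split2 _ p1 p2 _ h12 h2 (mS _)).
rewrite (int_piece _ _ _ _ _ h1 e1) (int_piece _ _ _ _ _ h12 e2) (int_piece _ _ _ _ _ h2 e3).
by rewrite -!EFinD; congr (_%:E); rewrite expr1n (_ : (-1) ^+ 2 = 1 :> R) ?sqrrN ?expr1n //; ring.
Qed.
Lemma Ups_neg2 (D N : R) : 0 < D -> D + N <= 0 -> Upsilon (1 + N / D) = 0.
Proof.
move=> D0 h; rewrite /Upsilon ifT //.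
have -> : 1 + N / D = (D + N) / D by field; rewrite gt_eqF.
by rewrite pmulr_lle0 // invr_gt0.
Qed.

Lemma Ups_same (v y e : R) : 0 <= v -> 0 <= y -> 0 < v + y -> 0 < e -> e < 1 ->
  Upsilon (1 + (e - Num.max v y - 1) / (v + y)) =
  Num.max 0 (Num.min v y + e - 1) / (v + y).
Proof.
move=> v0 y0 s0 e0 e1.
have -> : 1 + (e - Num.max v y - 1) / (v + y) = (Num.min v y + e - 1) / (v + y).
  have hs := addr_max_min v y.
  move: s0; rewrite -hs; move: (Num.max v y) (Num.min v y) => M m s0.
  by field; rewrite gt_eqF.
set t := Num.min v y + e - 1.
have tlt : t < v + y.
  rewrite /t -(addr_max_min v y).
  have : 0 <= Num.max v y by rewrite le_max v0.
  lra.
have [t0|t0] := leP t 0.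
  rewrite mul0r /Upsilon ifT //.
  by rewrite pmulr_lle0 // invr_gt0.
rewrite /Upsilon ifF; last by apply/negbTE; rewrite -ltNge divr_gt0.
by rewrite ifT // ltr_pdivrMr // mul1r.
Qed.
Definition sg (w : R) : R := if 0 <= w then 1 else -1.
Definition hfun (e w z : R) : R := Num.max 0 (Num.min `|w| (sg w * z) + e - 1).

Lemma max0_eq (x : R) : x <= 0 -> Num.max 0 x = 0.
Proof. by move=> h; rewrite max_l. Qed.

Lemma Phi0_formula (eta w z : R) : 2 <= eta -> -1 < w < 1 -> -1 < z < 1 ->
  Phi0 eta w z = 6 / pi ^+ 2 * (hfun eta^-1 w z / (`|w| + `|z|)).
Proof.
move=> eta2 /andP[w1 w2] /andP[z1 z2].
have eta0 : 0 < eta by apply: lt_le_trans eta2.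
have e0 : 0 < eta^-1 by rewrite invr_gt0.
have e1 : eta^-1 <= 2^-1 by rewrite lef_pV2 // posrE.
move: e0 e1; rewrite /Phi0 /hfun /sg; set e := eta^-1 => e0 e1.
have [w0|w0] := leP 0 w; have [z0|z0] := leP 0 z.
- rewrite (ger0_norm w0) (ger0_norm z0) mul1r.
  have [wz0|wz0] := eqVneq (w + z) 0.
  + have w00 : w = 0 by lra.
    have z00 : z = 0 by lra.
    rewrite /= ifT; last by lra.
    by rewrite w00 z00 minxx max0_eq ?mul0r ?mulr0 //; lra.
  + rewrite /= ger0_norm ?addr_ge0 // Ups_same //; last by lra.
    by rewrite lt_neqAle eq_sym wz0 addr_ge0.
- rewrite (ger0_norm w0) (ltr0_norm z0) mul1r.
  have hm : Num.min w z <= z by rewrite ge_min lexx orbT.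
  rewrite max0_eq ?mul0r ?mulr0; last by lra.
  have [wz0|wz0] := eqVneq (w + z) 0.
    by rewrite /= ifT //; lra.
  rewrite /= Ups_neg2 ?mulr0 // ?normr_gt0 //.
  have hM1 : w <= Num.max w (- z) by rewrite le_max lexx.
  have hM2 : - z <= Num.max w (- z) by rewrite le_max lexx orbT.
  have : `|w + z| <= Num.max w (- z) by rewrite ler_norml; apply/andP; split; lra.
  lra.
- rewrite (ltr0_norm w0) (ger0_norm z0) mulN1r.
  have hm : Num.min (- w) (- z) <= - z by rewrite ge_min lexx orbT.
  rewrite max0_eq ?mul0r ?mulr0; last by lra.
  have [wz0|wz0] := eqVneq (w + z) 0.
    by rewrite /= ifT //; lra.
  rewrite /= Ups_neg2 ?mulr0 // ?normr_gt0 //.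
  have hM1 : - w <= Num.max (- w) z by rewrite le_max lexx.
  have hM2 : z <= Num.max (- w) z by rewrite le_max lexx orbT.
  have : `|w + z| <= Num.max (- w) z by rewrite ler_norml; apply/andP; split; lra.
  lra.
- rewrite (ltr0_norm w0) (ltr0_norm z0) mulN1r.
  have wz0 : w + z != 0 by rewrite lt_eqF //; lra.
  rewrite wz0 ltr0_norm; last by lra.
  rewrite opprD Ups_same //; lra.
Qed.
Lemma hfun_ge0 e w z : 0 <= hfun e w z.
Proof. by rewrite /hfun le_max lexx. Qed.

Lemma hfun_S (e w z : R) : 0 < hfun e w z -> 2 - 2 * e <= `|w| + `|z|.
Proof.
rewrite /hfun lt_max ltxx /= => h.
have h' : 1 - e < Num.min `|w| (sg w * z) by lra.
move: h'; rewrite lt_min => /andP[hw hz].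
have : sg w * z <= `|z|.
  rewrite /sg; case: ifP => _; first by rewrite mul1r ler_norm.
  by rewrite mulN1r -normrN ler_norm.
lra.
Qed.

Lemma Phi0_bounds (eta w z : R) : 2 <= eta -> -1 < w < 1 -> -1 < z < 1 ->
  6 / pi ^+ 2 / 2 * hfun eta^-1 w z <= Phi0 eta w z <=
  6 / pi ^+ 2 * (1 + 2 * eta^-1) / 2 * hfun eta^-1 w z.
Proof.
move=> eta2 hw hz; rewrite (Phi0_formula _ _ _ eta2 hw hz).
have eta0 : 0 < eta by apply: lt_le_trans eta2.
have e0 : 0 < eta^-1 by rewrite invr_gt0.
have e1 : eta^-1 <= 2^-1 by rewrite lef_pV2 // posrE.
have c0 : 0 < 6 / pi ^+ 2 :> R by rewrite divr_gt0 // exprn_gt0 // pi_gt0.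
move: e0 e1 c0; set e := eta^-1; set c := 6 / pi ^+ 2 => e0 e1 c0.
have := hfun_ge0 e w z; rewrite le_eqVlt => /predU1P[<-|hp].
  by rewrite !(mul0r, mulr0) lexx.
have S2 := hfun_S _ _ _ hp.
move: hp S2; set h := hfun e w z => hp S2.
have Slt : `|w| + `|z| < 2.
  move: hw hz => /andP[? ?] /andP[? ?].
  have : `|w| < 1 by rewrite ltr_norml; apply/andP; split.
  have : `|z| < 1 by rewrite ltr_norml; apply/andP; split.
  lra.
have S0 : 0 < `|w| + `|z| by lra.
move: S0 Slt S2; set S := `|w| + `|z| => S0 Slt S2.
have q0 : 0 < h / S by rewrite divr_gt0.
have hq : h / S * S = h by rewrite divfK // gt_eqF.
move: q0 hq; set q := h / S => q0 hq.
rewrite -hq.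
have cq : 0 < c * q by rewrite mulr_gt0.
have h2 : 2 <= (1 + 2 * e) * S by nra.
apply/andP; split; nra.
Qed.
Lemma mhfun (k e w : R) : measurable_fun setT (fun z => k * hfun e w z).
Proof.
rewrite /hfun.
apply: measurable_funM => //.
apply: measurable_maxr => //.
apply: measurable_funB => //.
apply: measurable_funD => //.
apply: measurable_minr => //.
Qed.
Definition J (e a : R) : R := if a < e then (e ^+ 2 - a ^+ 2) / 2 else 0.

Lemma inner_int (k e w : R) : 0 < e -> e <= 2^-1 -> -1 < w < 1 ->
  (\int[mu]_(z in `](-1)%R, 1%R[) (k * hfun e w z)%:E = (k * J e (1 - `|w|))%:E)%E.
Proof.
move=> e0 e1 /andP[w1 w2].
rewrite /J; case: ifP => ae; last first.
  rewrite mulr0 integral0_eq // => z _.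
  rewrite /hfun max0_eq ?mulr0 //.
  have : Num.min `|w| (sg w * z) <= `|w| by rewrite ge_min lexx.
  move/negbT: ae; rewrite -leNgt; lra.
have [w0|w0] := leP 0 w.
- move: ae; rewrite (ger0_norm w0) => ae.
  rewrite (@int3 (fun z => k * hfun e w z) (1 - e) w 0 0 k (k * (e - 1)) 0 (k * (e - 1 + w))).
  + by congr (_%:E); field.
  + lra.
  + lra.
  + lra.
  + exact: mhfun.
  + move=> x /andP[_ x2]; rewrite /hfun /sg ifT // mul1r (ger0_norm w0) max0_eq.
      by rewrite !mul0r mulr0 add0r.
    have : Num.min w x <= x by rewrite ge_min lexx orbT.
    lra.
  + move=> x /andP[x1 x2]; rewrite /hfun /sg ifT // mul1r (ger0_norm w0) min_r //.
    by rewrite max_r; [ring | lra].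
  + move=> x /andP[x1 x2]; rewrite /hfun /sg ifT // mul1r (ger0_norm w0) min_l //.
    by rewrite max_r; [ring | lra].
- move: ae; rewrite (ltr0_norm w0) => ae.
  rewrite (@int3 (fun z => k * hfun e w z) w (e - 1) 0 (k * (e - 1 - w)) (- k) (k * (e - 1)) 0 0).
  + by congr (_%:E); field.
  + lra.
  + lra.
  + lra.
  + exact: mhfun.
  + move=> x /andP[x1 x2]; rewrite /hfun /sg ifF; last by apply/negbTE; rewrite -ltNge.
    rewrite (ltr0_norm w0) mulN1r min_l; last lra.
    by rewrite max_r; [ring | lra].
  + move=> x /andP[x1 x2]; rewrite /hfun /sg ifF; last by apply/negbTE; rewrite -ltNge.
    rewrite (ltr0_norm w0) mulN1r min_r; last lra.
    by rewrite max_r; [ring | lra].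
  + move=> x /andP[x1 x2]; rewrite /hfun /sg ifF; last by apply/negbTE; rewrite -ltNge.
    rewrite (ltr0_norm w0) mulN1r max0_eq.
      by rewrite !mul0r mulr0 add0r.
    have : Num.min (- w) (- x) <= - x by rewrite ge_min lexx orbT.
    lra.
Qed.
Lemma restr_int (f : R -> \bar R) (p q : R) : (forall x, q < x -> f x = 0%E) ->
  (\int[mu]_(x in `[p, +oo[) f x = \int[mu]_(x in `[p, q]) f x)%E.
Proof.
move=> f0; rewrite integral_mkcond [RHS]integral_mkcond; congr (integral _ _ _).
apply/funext => x; rewrite /patch.
have [xq|xq] := leP (x : R) q.
  have -> : (x \in `[p, +oo[%classic) = (x \in `[p, q]%classic).
    apply/idP/idP => /set_mem; rewrite /= !in_itv /= => H; apply/mem_set;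
      rewrite /= in_itv /=; move: H; rewrite ?xq ?andbT //.
  by [].
by rewrite f0 //; do 2 case: ifP.
Qed.
Lemma eta_facts (eta : R) : 2 <= eta -> 0 < eta^-1 /\ eta^-1 <= 2^-1.
Proof.
move=> eta2; have eta0 : 0 < eta by apply: lt_le_trans eta2.
by split; [rewrite invr_gt0 | rewrite lef_pV2 // posrE].
Qed.

Lemma I_lower (eta w : R) : 2 <= eta -> -1 < w < 1 ->
  ((6 / pi ^+ 2 / 2 * J eta^-1 (1 - `|w|))%:E <=
   \int[mu]_(z in `](-1)%R, 1%R[) (Phi0 eta w z)%:E)%E.
Proof.
move=> eta2 hw; have [e0 e1] := eta_facts _ eta2.
have c0 : 0 < 6 / pi ^+ 2 :> R by rewrite divr_gt0 // exprn_gt0 // pi_gt0.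
rewrite -inner_int //; apply: le_int_ge0 => z /=; rewrite in_itv /= => hz.
  by rewrite lee_fin mulr_ge0 ?hfun_ge0 // divr_ge0 // ltW.
by rewrite lee_fin; case/andP: (Phi0_bounds _ _ _ eta2 hw hz).
Qed.

Lemma I_upper (eta w : R) : 2 <= eta -> -1 < w < 1 ->
  (\int[mu]_(z in `](-1)%R, 1%R[) (Phi0 eta w z)%:E <=
   (6 / pi ^+ 2 * (1 + 2 * eta^-1) / 2 * J eta^-1 (1 - `|w|))%:E)%E.
Proof.
move=> eta2 hw; have [e0 e1] := eta_facts _ eta2.
have c0 : 0 < 6 / pi ^+ 2 :> R by rewrite divr_gt0 // exprn_gt0 // pi_gt0.
rewrite -inner_int //; apply: le_int_ge0 => z /=; rewrite in_itv /= => hz.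
  case/andP: (Phi0_bounds _ _ _ eta2 hw hz) => H _; rewrite lee_fin (le_trans _ H) //.
  by rewrite mulr_ge0 ?hfun_ge0 // divr_ge0 // ltW.
by rewrite lee_fin; case/andP: (Phi0_bounds _ _ _ eta2 hw hz).
Qed.
Lemma J_ge0 (e a : R) : 0 <= a -> 0 <= J e a.
Proof.
move=> a0; rewrite /J; case: ifP => // ae.
have : 0 <= e ^+ 2 - a ^+ 2 by rewrite subr_ge0 ler_pXn2r // ?nnegrE // ltW // (le_lt_trans a0).
by move=> h; rewrite divr_ge0.
Qed.

Lemma J_zero (e a : R) : e <= a -> J e a = 0.
Proof. by move=> h; rewrite /J ifF //; apply/negbTE; rewrite -leNgt. Qed.

Lemma J_eq (eta a : R) : 0 < a -> 0 < eta -> eta <= a^-1 ->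
  J eta^-1 a = (eta ^- 2 - a ^+ 2) / 2.
Proof.
move=> a0 eta0 h; rewrite /J -exprVn; case: ifP => // /negbT; rewrite -leNgt => h2.
have : a <= eta^-1 by rewrite -[a]invrK lef_pV2 // posrE invr_gt0.
move=> h3; have -> : eta^-1 = a by apply/eqP; rewrite eq_le h2 h3.
by rewrite subrr mul0r.
Qed.
Lemma ptw_upper (c x xi a : R) : 0 < c -> 0 < xi -> xi <= x -> 0 < a -> x <= a^-1 ->
  c * (1 + 2 / x) / 2 * J x^-1 a <= (c / 4 + c / 2 / xi) / x ^+ 2 - c / 4 * a ^+ 2.
Proof.
move=> c0 xi0 h1 a0 h2; have x0 : 0 < x by apply: lt_le_trans h1.
rewrite J_eq // -!exprVn.
have e0 : 0 < x^-1 by rewrite invr_gt0.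
have eX : x^-1 <= xi^-1 by rewrite lef_pV2.
have ae : a <= x^-1 by rewrite -[a]invrK lef_pV2 // posrE invr_gt0.
move: e0 eX ae; set e := x^-1; set X := xi^-1 => e0 eX ae.
have k : 0 <= c * (e ^+ 2 * (X - e) + e * a ^+ 2).
  apply: mulr_ge0; first exact: ltW.
  apply: addr_ge0; apply: mulr_ge0; rewrite ?sqr_ge0 ?subr_ge0 // ltW //.
lra.
Qed.

Lemma abs_helper (r L U M B : R) : L <= r -> r <= U -> L = M -> U - L <= B ->
  `|r - M| <= B.
Proof. move=> h1 h2 <- h3; rewrite ler_norml; apply/andP; split; lra. Qed.
End S.

Theorem mainTheorem3 (R : realType) :
  exists C : R, exists xi0 : R, 0 < xi0 /\
    forall xi w : R, xi0 <= xi -> -1 < w < 1 ->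
      let u := xi * (1 - `|w|) in
      (0 <= u < 1 ->
         (`| Phi xi w - (3 / (2 * pi ^+ 2) * (1 - u) ^+ 2 * xi^-1)%:E |
            <= (C * xi ^- 2)%:E)%E) /\
      (~~ (0 <= u < 1) -> Phi xi w = 0%E).
Proof.
exists (3 / pi ^+ 2), 2; split => // xi w xi2 hw u.
have xi0 : 0 < xi by apply: lt_le_trans xi2.
have eta2 : forall eta, xi <= eta -> 2 <= eta by move=> eta h; apply: le_trans h.
have lowI := fun eta h => @I_lower R eta w (eta2 eta h) hw.
have upI := fun eta h => @I_upper R eta w (eta2 eta h) hw.
have c0 : 0 < 6 / pi ^+ 2 :> R by rewrite divr_gt0 // exprn_gt0 // pi_gt0.
have pi0 : pi != 0 :> R by rewrite gt_eqF // pi_gt0.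
set c := 6 / pi ^+ 2 in c0 lowI upI *.
have wlt : `|w| < 1 by case/andP: hw => ? ?; rewrite ltr_norml; apply/andP; split.
set a := 1 - `|w| in lowI upI u *.
have a0 : 0 < a by rewrite /a subr_gt0.
have a1 : a <= 1 by rewrite /a; have := normr_ge0 w; lra.
rewrite /Phi.
set I := fun eta => (\int[lebesgue_measure]_(z in `](-1)%R, 1%R[) (Phi0 eta w z)%:E)%E.
have I0 : forall eta, xi <= eta -> (0 <= I eta)%E.
  move=> eta h; apply: le_trans (lowI eta h).
  rewrite lee_fin mulr_ge0 //; first by rewrite divr_ge0 // ltW.
  by apply: J_ge0; apply: ltW.
have hin : forall eta, `[xi, +oo[%classic eta -> xi <= eta.
  by move=> eta; rewrite /= in_itv /= andbT.
have Jzero : forall eta, 0 < eta -> 1 <= eta * a -> J R eta^-1 a = 0.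
  move=> eta eta0 h; apply: J_zero.
  by rewrite -[eta^-1]mul1r ler_pdivrMr // mulrC.
split.
- move=> /andP[u0 u1].
  have xa : xi < a^-1 by rewrite -[a^-1]mul1r ltr_pdivlMr.
  have ai : 0 < a^-1 by rewrite invr_gt0.
  have HL : ((c / 4 * (xi^-1 - a^-1^-1) + - (c / 4 * a ^+ 2) * (a^-1 - xi))%:E <=
             \int[lebesgue_measure]_(x in `[xi, +oo[) I x)%E.
    rewrite -(@inv_int R xi a^-1 _ _ xi0 (ltW xa)).
    rewrite [X in (X <= _)%E](_ : _ = \int[lebesgue_measure]_(x in `[xi, a^-1%R]) ((c / 2 * J R x^-1 a)%R)%:E)%E; last first.
      apply: eq_integral => x; rewrite inE /= in_itv /= => /andP[h1 h2].
      rewrite J_eq //; last by apply: lt_le_trans h1.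
      have x0 : x != 0 by rewrite gt_eqF // (lt_le_trans xi0 h1).
      by congr (_%:E); field.
    rewrite -(@restr_int R (fun x => (c / 2 * J R x^-1 a)%:E) xi a^-1); last first.
      move=> x hx; rewrite Jzero ?mulr0 //; first exact: lt_trans ai hx.
      by move: hx; rewrite -[a^-1]mul1r ltr_pdivrMr // => /ltW.
    apply: (@le_int_ge0 R) => x /hin hx; last exact: lowI.
    rewrite lee_fin mulr_ge0 //; first by rewrite divr_ge0 // ltW.
    by apply: J_ge0; apply: ltW.
  have HU : (\int[lebesgue_measure]_(x in `[xi, +oo[) I x <=
      ((c / 4 + c / 2 * xi^-1) * (xi^-1 - a^-1^-1) + - (c / 4 * a ^+ 2) * (a^-1 - xi))%:E)%E.
    apply: (@le_trans _ _ (\int[lebesgue_measure]_(x in `[xi, +oo[) ((c * (1 + 2 / x) / 2 * J R x^-1 a)%R)%:E)%E).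
      by apply: (@le_int_ge0 R) => x /hin hx; [exact: I0 | exact: upI].
    rewrite (@restr_int R _ xi a^-1); last first.
      move=> x hx; rewrite Jzero ?mulr0 //; first exact: lt_trans ai hx.
      by move: hx; rewrite -[a^-1]mul1r ltr_pdivrMr // => /ltW.
    rewrite -(@inv_int R xi a^-1 _ _ xi0 (ltW xa)).
    apply: (@le_int_ge0 R) => x; rewrite /= in_itv /= => /andP[h1 h2].
      have x0 : 0 < x by apply: lt_le_trans h1.
      rewrite lee_fin mulr_ge0 //; last by apply: J_ge0; apply: ltW.
      apply: divr_ge0 => //; apply: mulr_ge0; first exact: ltW.
      by apply: addr_ge0 => //; apply: divr_ge0 => //; exact: ltW.
    by rewrite lee_fin ptw_upper.
  move: HL HU; case: (\int[lebesgue_measure]_(x in `[xi, +oo[) I x)%E => [r| |] HL HU.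
  + rewrite -EFinB lee_fin; rewrite !lee_fin in HL HU.
    apply: (@abs_helper R _ _ _ _ _ HL HU).
      rewrite invrK /u; have a0' : a != 0 by rewrite gt_eqF.
      have xi0' : xi != 0 by rewrite gt_eqF.
      rewrite /c; move: pi0; move: (pi : R) => P P0.
      by field; rewrite xi0' a0' P0.
    rewrite invrK.
    have -> : (c / 4 + c / 2 * xi^-1) * (xi^-1 - a) + - (c / 4 * a ^+ 2) * (a^-1 - xi)
        - (c / 4 * (xi^-1 - a) + - (c / 4 * a ^+ 2) * (a^-1 - xi)) = c / 2 * xi^-1 * (xi^-1 - a).
      by ring.
    have -> : 3 / pi ^+ 2 / xi ^+ 2 = c / 2 * xi^-1 * xi^-1.
      have xi0' : xi != 0 by rewrite gt_eqF.
      rewrite /c; move: pi0; move: (pi : R) => P P0.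
      by field; rewrite xi0' P0.
    rewrite ler_pM2l; first by rewrite gerDl oppr_le0 ltW.
    by rewrite mulr_gt0 ?invr_gt0 // divr_gt0.
  + by move: HU; rewrite leNgt ltey.
  + by move: HL; rewrite leNgt ltNye.
- move=> hu.
  have ua : 1 <= xi * a.
    move: hu; rewrite negb_and -leNgt /u.
    have : 0 <= xi * a by rewrite mulr_ge0 // ltW.
    by move=> h /orP[h'|//]; rewrite h in h'.
  apply/eqP; rewrite eq_le; apply/andP; split; last first.
    by apply: integral_ge0 => x /hin; exact: I0.
  apply: (@le_trans _ _ (\int[lebesgue_measure]_(x in `[xi, +oo[) (fun=> 0%E) x)%E).
    apply: (@le_int_ge0 R) => x /hin hx; first exact: I0.
    apply: (le_trans (upI x hx)); rewrite Jzero ?mulr0 //; first exact: lt_le_trans hx.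
    by apply: le_trans ua _; rewrite ler_pM2r.
  by rewrite integral0.
Qed.
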